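(* Let $r\ge c>0$, $n_0,\dots,n_r>0$, $m\ge0$, let $A=(a_0,\dots,a_r)$ be a complex $(c+1)\times(r+1)$ matrix of full rank with pairwise linearly independent columns, $l_i=(l_{i1},\dots,l_{in_i})$ tuples of positive integers, and $R(A,P_0):=\mathbb{C}[T_{ij},S_1,\dots,S_m]/\langle g_v;\ v\in\ker A\rangle$ with $g_v=\sum_i v_iT_i^{l_i}$, $T_i^{l_i}=\prod_jT_{ij}^{l_{ij}}$. Let $\mathbb{C}^{c+1}=V_1\oplus V_2$ be a decomposition into linear subspaces such that every column $a_i$ lies in $V_1$ or in $V_2$. (i) If $\dim V_1=1$, then $R(A,P_0)\cong R(A',P_0')$ as $\mathbb{C}$-algebras for data $(A',P_0')$ of the same kind (a matrix $A'$ with pairwise linearly independent columns and full row rank, exponent tuples, and $m'$ free variables) with $\operatorname{rk}A'<\operatorname{rk}A$ and $m'>m$. (ii) If $\dim V_1>1$ and $\dim V_2>1$, then $R(A,P_0)\cong R(A^{(1)},P_0^{(1)})\otimes R(A^{(2)},P_0^{(2)})$ as $\mathbb{C}$-algebras for suitably chosen data $(A^{(i)},P_0^{(i)})$ of the same kind with $\operatorname{rk}A^{(1)}+\operatorname{rk}A^{(2)}=\operatorname{rk}A$.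
   Context: $P_0$ denotes the matrix encoding the exponent tuples $l_0,\dots,l_r$ and the number $m$ of free variables $S_k$; the ring $R(A,P_0)$ depends only on $A$, the tuples $l_i$ and $m$. *)

(* Defs.v *)
From HB Require Import structures.
From mathcomp Require Import all_boot all_order all_algebra.
From mathcomp Require Import mpoly.
From mathcomp Require Import complex.
From mathcomp Require Import reals.

Unset Printing Implicit Defensive.

Import Order.TTheory GRing.Theory Num.Theory.
Local Open Scope ring_scope.

Section Defs.
Variable R : realType.
Local Notation C := (complex R).

(** Finitely presented commutative C-algebras: C[x_0, ..., x_{nv-1}] / I,
    where I is given by its membership predicate. *)
Record presentation := Pres {
  pres_nv : nat;
  pres_ideal : {mpoly C[pres_nv]} -> Prop
}.

Definition ideal_gen (n : nat) (G : {mpoly C[n]} -> Prop) (p : {mpoly C[n]}) : Prop :=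
  exists (k : nat) (q g : 'I_k -> {mpoly C[n]}),
    (forall i, G (g i)) /\ p = \sum_(i < k) q i * g i.

(** C-algebra homomorphism C[x]/I -> C[y]/J induced by the substitution
    x_i |-> phi i (well defined when it maps I into J). *)
Definition subst (n k : nat) (phi : 'I_n -> {mpoly C[k]}) (p : {mpoly C[n]})
  : {mpoly C[k]} := comp_mpoly [tuple phi i | i < n] p.

Definition pres_iso (P1 P2 : presentation) : Prop :=
  exists (phi : 'I_(pres_nv P1) -> {mpoly C[pres_nv P2]})
         (psi : 'I_(pres_nv P2) -> {mpoly C[pres_nv P1]}),
    [/\ forall p, pres_ideal P1 p -> pres_ideal P2 (@subst _ _ phi p),
        forall q, pres_ideal P2 q -> pres_ideal P1 (@subst _ _ psi q),
        forall p, pres_ideal P1 (@subst _ _ psi (@subst _ _ phi p) - p) &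
        forall q, pres_ideal P2 (@subst _ _ phi (@subst _ _ psi q) - q)].

(** Tensor product over C of presented algebras:
    C[x, y] / (I C[x,y] + J C[x,y]). *)
Definition pres_tensor (P1 P2 : presentation) : presentation :=
  let n1 := pres_nv P1 in let n2 := pres_nv P2 in
  @Pres (n1 + n2)
    (@ideal_gen (n1 + n2) (fun g =>
       (exists p, pres_ideal P1 p /\
          g = @subst n1 (n1 + n2) (fun i : 'I_n1 => 'X_(lshift n2 i) : {mpoly C[n1 + n2]}) p)
    \/ (exists q, pres_ideal P2 q /\
          g = @subst n2 (n1 + n2) (fun j : 'I_n2 => 'X_(rshift n1 j) : {mpoly C[n1 + n2]}) q))).

Record data := Data {
  d_r : nat;
  d_c : nat;
  d_A : 'M[C]_(d_c.+1, d_r.+1);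
  d_n : 'I_d_r.+1 -> nat;
  d_l : forall i : 'I_d_r.+1, 'I_(d_n i) -> nat;
  d_m : nat
}.

Definition var_type (D : data) : finType :=
  ({i : 'I_(d_r D).+1 & 'I_(d_n D i)} + 'I_(d_m D))%type.

Definition nvars (D : data) : nat := #|{: var_type D}|.

Definition Var (D : data) (v : var_type D) : {mpoly C[nvars D]} :=
  'X_(enum_rank v).

Definition T (D : data) (i : 'I_(d_r D).+1) (j : 'I_(d_n D i)) : {mpoly C[nvars D]} :=
  Var D (inl (Tagged (fun i => 'I_(d_n D i)) j)).

Definition S (D : data) (k : 'I_(d_m D)) : {mpoly C[nvars D]} := Var D (inr k).

Definition Tmon (D : data) (i : 'I_(d_r D).+1) : {mpoly C[nvars D]} :=
  \prod_(j < d_n D i) T D i j ^+ d_l D i j.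

Definition gv (D : data) (v : 'cV[C]_(d_r D).+1) : {mpoly C[nvars D]} :=
  \sum_(i < (d_r D).+1) v i ord0 *: Tmon D i.

Definition RAP (D : data) : presentation :=
  @Pres (nvars D) (@ideal_gen (nvars D) (fun g => exists v, d_A D *m v = 0 /\ g = gv D v)).

Definition acol (D : data) (i : 'I_(d_r D).+1) : 'rV[C]_(d_c D).+1 :=
  (col i (d_A D))^T.

Definition data_ok (D : data) : Prop :=
  [/\ \rank (d_A D) = (d_c D).+1,
      forall i j : 'I_(d_r D).+1, i != j ->
        \rank (col_mx (acol D i) (acol D j)) = 2%N,
      forall i, (0 < d_n D i)%N &
      forall i (j : 'I_(d_n D i)), (0 < d_l D i j)%N].

End Defs.

Arguments pres_nv {R}. Arguments pres_ideal {R}.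
Arguments d_r {R}. Arguments d_c {R}. Arguments d_A {R}. Arguments d_n {R}.
Arguments d_l {R}. Arguments d_m {R}.
Arguments nvars {R}. Arguments Var {R}. Arguments T {R}. Arguments S {R}.
Arguments Tmon {R}. Arguments gv {R}. Arguments RAP {R}. Arguments acol {R}.
Arguments data_ok {R}. Arguments pres_iso {R}. Arguments pres_tensor {R}.

(* Main.v *)
Require Import Defs.
From HB Require Import structures.
From mathcomp Require Import all_boot all_order all_algebra.
From mathcomp Require Import mpoly complex.
From mathcomp Require Import reals.
From Stdlib Require Import Eqdep_dec.
Import GRing.Theory Num.Theory.
Local Open Scope ring_scope.

Section Subst.
Variable R : realType.
Local Notation C := (complex R).
Local Notation subst := (@subst R _ _).
Local Notation ideal_gen := (@ideal_gen R _).
Local Notation Pres := (@Pres R).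

Lemma substE n k (phi : 'I_n -> {mpoly C[k]}) p :
  subst phi p = p \mPo [tuple phi i | i < n].
Proof. by []. Qed.

Lemma substX n k (phi : 'I_n -> {mpoly C[k]}) i : subst phi 'X_i = phi i.
Proof. by rewrite substE comp_mpolyXU -tnth_nth tnth_mktuple. Qed.

Lemma substD n k (phi : 'I_n -> {mpoly C[k]}) p q : subst phi (p + q) = subst phi p + subst phi q.
Proof. exact: comp_mpolyD. Qed.
Lemma substB n k (phi : 'I_n -> {mpoly C[k]}) p q : subst phi (p - q) = subst phi p - subst phi q.
Proof. exact: comp_mpolyB. Qed.
Lemma substM n k (phi : 'I_n -> {mpoly C[k]}) p q : subst phi (p * q) = subst phi p * subst phi q.
Proof. by rewrite !substE rmorphM. Qed.
Lemma substZ n k (phi : 'I_n -> {mpoly C[k]}) c p : subst phi (c *: p) = c *: subst phi p.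
Proof. exact: comp_mpolyZ. Qed.
Lemma subst_sum n k (phi : 'I_n -> {mpoly C[k]}) I (r : seq I) P (F : I -> _) :
  subst phi (\sum_(i <- r | P i) F i) = \sum_(i <- r | P i) subst phi (F i).
Proof. by rewrite substE raddf_sum. Qed.
Lemma subst_prod n k (phi : 'I_n -> {mpoly C[k]}) I (r : seq I) P (F : I -> _) :
  subst phi (\prod_(i <- r | P i) F i) = \prod_(i <- r | P i) subst phi (F i).
Proof. by rewrite substE rmorph_prod. Qed.
Lemma substXn n k (phi : 'I_n -> {mpoly C[k]}) p e : subst phi (p ^+ e) = subst phi p ^+ e.
Proof. by rewrite substE rmorphXn. Qed.

Lemma subst_comp n k l (phi : 'I_k -> {mpoly C[l]}) (psi : 'I_n -> {mpoly C[k]}) p :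
  subst phi (subst psi p) = subst (fun i => subst phi (psi i)) p.
Proof.
rewrite [subst psi p]substE comp_mpolyE subst_sum [RHS]substE comp_mpolyE.
apply: eq_bigr => m _; rewrite substZ subst_prod; congr (_ *: _).
by apply: eq_bigr => i _; rewrite substXn !tnth_mktuple.
Qed.

Lemma subst_id n p : subst (fun i : 'I_n => 'X_i : {mpoly C[n]}) p = p.
Proof. exact: comp_mpoly_id. Qed.

Lemma ideal_gen0 n (G : {mpoly C[n]} -> Prop) : ideal_gen G 0.
Proof. by exists 0%N, (fun _ => 0), (fun _ => 0); split => [[]//|]; rewrite big_ord0. Qed.

Lemma ideal_genG n (G : {mpoly C[n]} -> Prop) g : G g -> ideal_gen G g.
Proof.
by move=> Gg; exists 1%N, (fun _ => 1), (fun _ => g); split => //; rewrite big_ord1 mul1r.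
Qed.

Lemma split_lshift m n (i : 'I_m) : split (lshift n i) = inl i.
Proof. exact: (unsplitK (inl i)). Qed.
Lemma split_rshift m n (i : 'I_n) : split (rshift m i) = inr i.
Proof. exact: (unsplitK (inr i)). Qed.

Lemma ideal_genD n (G : {mpoly C[n]} -> Prop) p q :
  ideal_gen G p -> ideal_gen G q -> ideal_gen G (p + q).
Proof.
move=> [k1 [q1 [g1 [G1 ->]]]] [k2 [q2 [g2 [G2 ->]]]].
exists (k1 + k2)%N, (fun i => match split i with inl a => q1 a | inr b => q2 b end),
  (fun i => match split i with inl a => g1 a | inr b => g2 b end).
split; first by move=> i; case: split.
by rewrite big_split_ord /=; congr (_ + _); apply: eq_bigr => i _;
  rewrite ?split_lshift ?split_rshift.
Qed.

Lemma ideal_genM n (G : {mpoly C[n]} -> Prop) a p :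
  ideal_gen G p -> ideal_gen G (a * p).
Proof.
move=> [k1 [q1 [g1 [G1 ->]]]]; exists k1, (fun i => a * q1 i), g1; split => //.
by rewrite mulr_sumr; apply: eq_bigr => i _; rewrite mulrA.
Qed.

Lemma ideal_gen_subst n k (G : {mpoly C[n]} -> Prop) (G' : {mpoly C[k]} -> Prop) phi :
  (forall g, G g -> ideal_gen G' (subst phi g)) ->
  forall p, ideal_gen G p -> ideal_gen G' (subst phi p).
Proof.
move=> HG p [k1 [q1 [g1 [G1 ->]]]]; rewrite subst_sum.
elim/big_rec: _ => [|i x _ Hx]; first exact: ideal_gen0.
by apply: ideal_genD => //; rewrite substM; apply/ideal_genM/HG.
Qed.

Lemma eq_subst n k (phi psi : 'I_n -> {mpoly C[k]}) p :
  phi =1 psi -> subst phi p = subst psi p.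
Proof.
move=> E; rewrite !substE.
have -> : [tuple phi i | i < n] = [tuple psi i | i < n].
  by apply: eq_from_tnth => i; rewrite !tnth_mktuple.
by [].
Qed.

Lemma iso_rename n1 n2 (G1 : {mpoly C[n1]} -> Prop) (G2 : {mpoly C[n2]} -> Prop)
  (f : 'I_n1 -> 'I_n2) (g : 'I_n2 -> 'I_n1) :
  cancel f g -> cancel g f ->
  (forall x, G1 x -> ideal_gen G2 (subst (fun i => 'X_(f i)) x)) ->
  (forall y, G2 y -> ideal_gen G1 (subst (fun i => 'X_(g i)) y)) ->
  pres_iso (Pres n1 (ideal_gen G1)) (Pres n2 (ideal_gen G2)).
Proof.
move=> fK gK H1 H2; exists (fun i => 'X_(f i)), (fun i => 'X_(g i)); split.
- exact: ideal_gen_subst.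
- exact: ideal_gen_subst.
- move=> p; rewrite subst_comp.
  rewrite (@eq_subst _ _ _ (fun i => 'X_i)); last by move=> i; rewrite substX fK.
  by rewrite subst_id subrr; apply: ideal_gen0.
- move=> p; rewrite subst_comp.
  rewrite (@eq_subst _ _ _ (fun i => 'X_i)); last by move=> i; rewrite substX gK.
  by rewrite subst_id subrr; apply: ideal_gen0.
Qed.

End Subst.

Definition subdata (R : realType) (D : data R) r' c' (sg : 'I_r'.+1 -> 'I_(d_r D).+1)
  (A' : 'M[complex R]_(c'.+1, r'.+1)) (m' : nat) : data R :=
  @Data R r' c' A' (fun i => d_n D (sg i)) (fun i j => d_l D (sg i) j) m'.

Definition inW (R : realType) (D : data R) (W : 'M[complex R]_((d_c D).+1)) i :=
  (acol D i <= W)%MS.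

Section LA.
Variable R : realType.
Local Notation C := (complex R).
Local Notation subst := (@subst R _ _).
Variables (D : data R) (W Wc : 'M[C]_((d_c D).+1)).
Hypothesis rankA : \rank (d_A D) = (d_c D).+1.
Hypothesis cap0 : forall x : 'rV_(d_c D).+1, (x <= W)%MS -> (x <= Wc)%MS -> x = 0.
Hypothesis colW : forall i, (acol D i <= W)%MS \/ (acol D i <= Wc)%MS.
Local Notation P := (@inW R D W).

Lemma kerA (v : 'cV[C]_(d_r D).+1) : (d_A D *m v == 0) = (\sum_i v i 0 *: acol D i == 0).
Proof.
rewrite -(inj_eq (@trmx_inj _ _ _)) trmx_mul trmx0 mulmx_sum_row.
by congr (_ == _); apply: eq_bigr => i _; rewrite /acol tr_col mxE.
Qed.

Lemma colWc i : ~~ P i -> (acol D i <= Wc)%MS.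
Proof. by rewrite /inW; case: (colW i) => -> . Qed.

Lemma split_zero (u : 'I_(d_r D).+1 -> C) :
  ((\sum_(i < (d_r D).+1 | ~~ P i) u i *: acol D i)%R <= W)%MS ->
  \sum_(i < (d_r D).+1 | ~~ P i) u i *: acol D i = 0.
Proof.
move=> HW; apply: cap0 => //.
by apply: summx_sub => i Hi; apply: scalemx_sub; apply: colWc.
Qed.

Lemma ker_split (v : 'cV[C]_(d_r D).+1) : d_A D *m v = 0 ->
  \sum_(i < (d_r D).+1 | P i) v i 0 *: acol D i = 0 /\ \sum_(i < (d_r D).+1 | ~~ P i) v i 0 *: acol D i = 0.
Proof.
move=> /eqP; rewrite kerA (bigID P) /= => /eqP E.
have E2 : \sum_(i < (d_r D).+1 | ~~ P i) v i 0 *: acol D i = 0.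
  apply: split_zero.
  have -> : \sum_(i < (d_r D).+1 | ~~ P i) v i 0 *: acol D i = (-1) *: \sum_(i < (d_r D).+1 | P i) v i 0 *: acol D i.
    by rewrite scaleN1r; apply/eqP; rewrite -addr_eq0 addrC E.
  by apply: scalemx_sub; apply: summx_sub => i Hi; apply: scalemx_sub.
by split => //; move: E; rewrite E2 addr0.
Qed.

Lemma span_W x : (x <= W)%MS ->
  exists u : 'I_(d_r D).+1 -> C, x = \sum_(i < (d_r D).+1 | P i) u i *: acol D i.
Proof.
move=> xW.
have : (x <= (d_A D)^T)%MS.
  apply: submx_trans (submx1 x) _.
  by rewrite sub1mx /row_full mxrank_tr rankA.
case/submxP => M Ex; exists (M 0).
have E : forall i, row i (d_A D)^T = acol D i by move=> i; rewrite /acol tr_col.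
have Ex' : x = \sum_i M 0 i *: acol D i.
  by rewrite Ex mulmx_sum_row; apply: eq_bigr => i _; rewrite E.
move: Ex'; rewrite (bigID P) /= => Ex'.
suff E0 : \sum_(i < (d_r D).+1 | ~~ P i) M 0 i *: acol D i = 0 by rewrite Ex' E0 addr0.
apply: (split_zero (M 0)).
have -> : \sum_(i < (d_r D).+1 | ~~ P i) M 0 i *: acol D i =
  x - \sum_(i < (d_r D).+1 | P i) M 0 i *: acol D i by rewrite Ex' addrAC subrr add0r.
rewrite -scaleN1r; apply: addmx_sub => //; apply: scalemx_sub.
by apply: summx_sub => i Hi; apply: scalemx_sub.
Qed.

Variables (r' c' : nat) (sg : 'I_r'.+1 -> 'I_(d_r D).+1) (B : 'M[C]_(c'.+1, (d_c D).+1)).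
Hypotheses (sg_inj : injective sg) (sgP : forall j, P (sg j))
  (sg_surj : forall i, P i -> exists j, sg j = i) (Bfree : row_free B) (BW : (B :=: W)%MS).

Lemma sum_sg (V : zmodType) (F : 'I_(d_r D).+1 -> V) :
  \sum_(i < (d_r D).+1 | P i) F i = \sum_(j < r'.+1) F (sg j).
Proof.
transitivity (\sum_(i in [set sg x | x in [set: 'I_r'.+1]]) F i).
  apply: eq_bigl => i; apply/idP/imsetP => [/sg_surj [j <-]|[j _ ->]].
    by exists j; rewrite ?inE.
  exact: sgP.
rewrite big_imset; last by move=> x y _ _; apply: sg_inj.
by apply: eq_bigl => j; rewrite inE.
Qed.

Definition yv j := acol D (sg j) *m pinvmx B.
Definition Amx : 'M[C]_(c'.+1, r'.+1) := \matrix_(k, j) yv j 0 k.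

Lemma yvB j : yv j *m B = acol D (sg j).
Proof. by rewrite mulmxKpV // BW; exact: sgP. Qed.

Lemma rowAT j : row j Amx^T = yv j.
Proof. by apply/rowP => k; rewrite !mxE. Qed.

Lemma acolAmx j : (col j Amx)^T = yv j.
Proof. by rewrite tr_col rowAT. Qed.

Lemma kerAmx (w : 'cV[C]_r'.+1) :
  (Amx *m w == 0) = (\sum_j w j 0 *: acol D (sg j) == 0).
Proof.
rewrite -(inj_eq (@trmx_inj _ _ _)) trmx_mul trmx0 mulmx_sum_row.
rewrite -(mulmx_free_eq0 _ Bfree) mulmx_suml.
by congr (_ == _); apply: eq_bigr => j _; rewrite mxE rowAT -scalemxAl yvB.
Qed.

Lemma rankAmx : \rank Amx = c'.+1.
Proof.
rewrite -mxrank_tr; apply/eqP; rewrite -/(row_full _) -sub1mx; apply/row_subP => k.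
set z := row k 1%:M.
have zW : (z *m B <= W)%MS by rewrite -BW submxMl.
have [u Hu] := span_W _ zW.
have -> : z = \sum_j u (sg j) *: yv j.
  apply: (row_free_inj Bfree); rewrite /= Hu sum_sg mulmx_suml.
  by apply: eq_bigr => j _; rewrite -scalemxAl yvB.
apply: summx_sub => j _; apply: scalemx_sub; rewrite -rowAT; exact: row_sub.
Qed.

Lemma pairAmx j j' :
  \rank (col_mx (acol D (sg j)) (acol D (sg j'))) = 2%N ->
  \rank (col_mx (yv j) (yv j')) = 2%N.
Proof.
move=> H; apply/eqP; rewrite eqn_leq rank_leq_row /= -{1}H.
by rewrite -!yvB -mul_col_mx mxrankM_maxl.
Qed.

Definition ext (w : 'cV[C]_r'.+1) : 'cV[C]_(d_r D).+1 :=
  \col_i \sum_(j < r'.+1 | sg j == i) w j 0.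

Lemma ext_sg w j : ext w (sg j) 0 = w j 0.
Proof.
rewrite mxE (big_pred1 j) // => j' /=; exact: (inj_eq sg_inj).
Qed.

Lemma ext_out w i : ~~ P i -> ext w i 0 = 0.
Proof.
move=> Hi; rewrite mxE big_pred0 // => j; apply/eqP => E.
by move: Hi; rewrite -E sgP.
Qed.

Lemma kerA_ext w : Amx *m w = 0 -> d_A D *m ext w = 0.
Proof.
move=> /eqP; rewrite kerAmx => /eqP H; apply/eqP; rewrite kerA (bigID P) /=.
rewrite [X in _ + X]big1 ?addr0; last by move=> i Hi; rewrite (ext_out _ _ Hi) scale0r.
rewrite sum_sg; apply/eqP; rewrite -[RHS]H; apply: eq_bigr => j _; by rewrite ext_sg.
Qed.

Lemma ker_restr (v : 'cV[C]_(d_r D).+1) :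
  d_A D *m v = 0 -> Amx *m (\col_j v (sg j) 0) = 0.
Proof.
move=> /ker_split [H _]; apply/eqP; rewrite kerAmx; rewrite sum_sg in H; rewrite -[X in _ == X]H.
by apply/eqP; apply: eq_bigr => j _; rewrite mxE.
Qed.

Local Notation D' m' := (@subdata R D r' c' sg Amx m').

Lemma Tmon_sub m' k (phi : 'I_(nvars D) -> {mpoly C[k]})
  (chi : 'I_(nvars (D' m')) -> {mpoly C[k]}) :
  (forall j (x : 'I_(d_n D (sg j))), subst phi (T D (sg j) x) = subst chi (T (D' m') j x)) ->
  forall j, subst phi (Tmon D (sg j)) = subst chi (Tmon (D' m') j).
Proof.
move=> H j; rewrite /Tmon !subst_prod; apply: eq_bigr => x _.
by rewrite !substXn H.
Qed.

Lemma gv_split (v : 'cV[C]_(d_r D).+1) :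
  gv D v = \sum_j v (sg j) 0 *: Tmon D (sg j) +
           \sum_(i < (d_r D).+1 | ~~ P i) v i 0 *: Tmon D i.
Proof. by rewrite /gv (bigID P) /= sum_sg. Qed.

Lemma gen_fwd m' k (phi : 'I_(nvars D) -> {mpoly C[k]})
  (chi : 'I_(nvars (D' m')) -> {mpoly C[k]}) :
  (forall j (x : 'I_(d_n D (sg j))), subst phi (T D (sg j) x) = subst chi (T (D' m') j x)) ->
  forall v : 'cV[C]_(d_r D).+1,
  subst phi (\sum_j v (sg j) 0 *: Tmon D (sg j)) = subst chi (gv (D' m') (\col_j v (sg j) 0)).
Proof.
move=> H v; rewrite /gv !subst_sum; apply: eq_bigr => j _.
by rewrite !substZ mxE (@Tmon_sub m' k phi chi H).
Qed.

Lemma gen_bwd m' (chi : 'I_(nvars (D' m')) -> {mpoly C[nvars D]}) :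
  (forall j (x : 'I_(d_n D (sg j))), subst chi (T (D' m') j x) = T D (sg j) x) ->
  forall w, subst chi (gv (D' m') w) = gv D (ext w).
Proof.
move=> H w; rewrite gv_split [X in _ + X]big1 ?addr0; last first.
  by move=> i Hi; rewrite ext_out // scale0r.
rewrite /gv subst_sum; apply: eq_bigr => j _; rewrite substZ ext_sg; congr (_ *: _).
have E := @Tmon_sub m' _ (fun i => 'X_i) chi
  (fun j' x => etrans (subst_id _ _ _) (esym (H j' x))).
by rewrite -E subst_id.
Qed.

End LA.

Lemma existT_inj (I : eqType) (F : I -> Type) i (x y : F i) :
  existT F i x = existT F i y -> x = y.
Proof. apply: inj_pair2_eq_dec; exact: eq_comparable. Qed.

Lemma bij_inv (T1 T2 : finType) (e : T1 -> T2) :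
  injective e -> (forall y, exists x, e x = y) ->
  exists g, cancel e g /\ cancel g e.
Proof.
move=> ei es.
have H y : exists x, e x == y by have [x <-] := es y; exists x.
exists (fun y => xchoose (H y)).
have K : cancel (fun y => xchoose (H y)) e by move=> y; exact/eqP/(xchooseP (H y)).
by split => // x; apply: ei; rewrite K.
Qed.

Section VarMaps.
Variable R : realType.

Definition e_one (D : data R) r' c' (sg : 'I_r'.+1 -> 'I_(d_r D).+1)
  (A' : 'M[complex R]_(c'.+1, r'.+1)) (i0 : 'I_(d_r D).+1)
  (w : @var_type R (@subdata R D r' c' sg A' (d_m D + d_n D i0))) : @var_type R D :=
  match w with
  | inl t => inl (existT (fun i => 'I_(d_n D i)) (sg (tag t)) (tagged t))
  | inr k => match split k with
             | inl k1 => inr k1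
             | inr k2 => inl (existT (fun i => 'I_(d_n D i)) i0 k2)
             end
  end.

Variables (D : data R) (r' c' : nat) (sg : 'I_r'.+1 -> 'I_(d_r D).+1)
  (A' : 'M[complex R]_(c'.+1, r'.+1)) (i0 : 'I_(d_r D).+1).

Lemma e_one_inj : injective sg -> (forall j, sg j != i0) -> injective (@e_one D r' c' sg A' i0).
Proof.
move=> sinj sne.
case=> [[j1 x1]|k1] [[j2 x2]|k2] /=.
- move=> [] E; have ? := sinj _ _ E; subst j2.
  move=> H; have Ex := @existT_inj _ (fun x : 'I_(d_r D).+1 => 'I_(d_n D x)) (sg j1) x1 x2 H.
  by rewrite Ex.
- case: (split k2) => [a|b] //= [] H _.
  by move: (sne j1); rewrite H eqxx.
- case: (split k1) => [a|b] //= [] H _.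
  by move: (sne j2); rewrite -H eqxx.
- case E1: (split k1) => [a1|b1]; case E2: (split k2) => [a2|b2] //=.
  + move=> [] H.
    by rewrite -(splitK k1) -(splitK k2) E1 E2 H.
  + move=> [] H.
    have Ex := @existT_inj _ (fun x : 'I_(d_r D).+1 => 'I_(d_n D x)) i0 b1 b2 H.
    by rewrite -(splitK k1) -(splitK k2) E1 E2 Ex.
Qed.

Lemma e_one_surj : (forall i, i != i0 -> exists j, sg j = i) ->
  forall u, exists w, @e_one D r' c' sg A' i0 w = u.
Proof.
move=> ssurj; case=> [[i x]|k].
- case: (eqVneq i i0) => [Ei|Ni].
  + subst i; exists (inr (rshift (d_m D) x)) => /=.
    by rewrite split_rshift.
  + have [j Ej] := ssurj i Ni; subst i.
    by exists (inl (existT _ j x)).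
- by exists (inr (lshift (d_n D i0) k)) => /=; rewrite split_lshift.
Qed.

End VarMaps.

Section VarMaps2.
Variable R : realType.

Definition e_sub (D : data R) r' c' (sg : 'I_r'.+1 -> 'I_(d_r D).+1)
  (A' : 'M[complex R]_(c'.+1, r'.+1)) m' (le : (m' <= d_m D)%N)
  (w : @var_type R (@subdata R D r' c' sg A' m')) : @var_type R D :=
  match w with
  | inl t => inl (existT (fun i => 'I_(d_n D i)) (sg (tag t)) (tagged t))
  | inr k => inr (widen_ord le k)
  end.

Lemma e_sub_inj (D : data R) r' c' sg A' m' le : injective sg ->
  injective (@e_sub D r' c' sg A' m' le).
Proof.
move=> sinj; case=> [[j1 x1]|k1] [[j2 x2]|k2] //=.
- move=> [] E; have ? := sinj _ _ E; subst j2.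
  move=> H; have Ex := @existT_inj _ (fun x : 'I_(d_r D).+1 => 'I_(d_n D x)) (sg j1) x1 x2 H.
  by rewrite Ex.
- by move=> [] H; congr inr; apply: val_inj; exact: H.
Qed.

Variables (D : data R) (r1 c1 : nat) (sg1 : 'I_r1.+1 -> 'I_(d_r D).+1)
  (A1 : 'M[complex R]_(c1.+1, r1.+1))
  (r2 c2 : nat) (sg2 : 'I_r2.+1 -> 'I_(d_r D).+1)
  (A2 : 'M[complex R]_(c2.+1, r2.+1)).

Local Notation D1 := (@subdata R D r1 c1 sg1 A1 0).
Local Notation D2 := (@subdata R D r2 c2 sg2 A2 (d_m D)).

Definition e_two (k : 'I_(nvars D1 + nvars D2)) : @var_type R D :=
  match split k with
  | inl a => @e_sub D r1 c1 sg1 A1 0 (leq0n _) (enum_val a)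
  | inr b => @e_sub D r2 c2 sg2 A2 (d_m D) (leqnn _) (enum_val b)
  end.

Lemma e_two_inj : injective sg1 -> injective sg2 ->
  (forall j1 j2, sg1 j1 != sg2 j2) -> injective e_two.
Proof.
move=> i1 i2 ne k1 k2; rewrite /e_two.
have cross : forall a b, @e_sub D r1 c1 sg1 A1 0 (leq0n _) a <>
                         @e_sub D r2 c2 sg2 A2 (d_m D) (leqnn _) b.
  case=> [[j1 x1]|k] [[j2 x2]|k'] //=.
  - by move=> [] H _; move: (ne j1 j2); rewrite H eqxx.
  - by case: k.
case E1: (split k1) => [a1|b1]; case E2: (split k2) => [a2|b2].
- move/e_sub_inj => /(_ i1) /enum_val_inj H.
  by rewrite -(splitK k1) -(splitK k2) E1 E2 H.
- by move/cross.
- by move/esym/cross.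
- move/e_sub_inj => /(_ i2) /enum_val_inj H.
  by rewrite -(splitK k1) -(splitK k2) E1 E2 H.
Qed.

Lemma e_two_surj :
  (forall i, (exists j, sg1 j = i) \/ (exists j, sg2 j = i)) ->
  forall u, exists k, e_two k = u.
Proof.
move=> cov; case=> [[i x]|k].
- case: (cov i) => [[j Ej]|[j Ej]]; subst i.
  + exists (lshift _ (enum_rank (inl (existT _ j x) : @var_type R D1))).
    by rewrite /e_two split_lshift enum_rankK.
  + exists (rshift _ (enum_rank (inl (existT _ j x) : @var_type R D2))).
    by rewrite /e_two split_rshift enum_rankK.
- exists (rshift _ (enum_rank (inr k : @var_type R D2))).
  rewrite /e_two split_rshift enum_rankK /=; congr inr; exact: val_inj.
Qed.

End VarMaps2.

Section Make.
Variable R : realType.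
Local Notation C := (complex R).
Variables (D : data R) (W Wc : 'M[C]_((d_c D).+1)).
Hypothesis rankA : \rank (d_A D) = (d_c D).+1.
Hypothesis cap0 : forall x : 'rV_(d_c D).+1, (x <= W)%MS -> (x <= Wc)%MS -> x = 0.
Hypothesis colW : forall i, (acol D i <= W)%MS \/ (acol D i <= Wc)%MS.

Lemma exists_col : (0 < \rank W)%N -> exists i, inW R D W i.
Proof.
move=> rW; case: (pickP (inW R D W)) => [i Hi|Hn]; first by exists i.
have W0 : W = 0.
  apply/row_matrixP => k; rewrite row0.
  have [u ->] := @span_W R D W Wc rankA cap0 colW _ (row_sub k W).
  by rewrite big_pred0.
by move: rW; rewrite W0 mxrank0.
Qed.

Lemma make_sg c' : \rank W = c'.+1 ->
  exists r' (sg : 'I_r'.+1 -> 'I_(d_r D).+1) (B : 'M[C]_(c'.+1, (d_c D).+1)),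
    [/\ injective sg, forall j, inW R D W (sg j),
        forall i, inW R D W i -> exists j, sg j = i, row_free B & (B :=: W)%MS].
Proof.
move=> rW.
have [i0 Hi0] : exists i, inW R D W i by apply: exists_col; rewrite rW.
set J := [set i | inW R D W i].
have J0 : (0 < #|J|)%N by apply/card_gt0P; exists i0; rewrite inE.
have e : (#|J|.-1).+1 = #|J| by rewrite prednK.
exists (#|J|.-1), (fun j => enum_val (cast_ord e j)).
have : forall d (B0 : 'M[C]_(d, (d_c D).+1)), row_free B0 -> (B0 :=: W)%MS -> d = c'.+1 ->
  exists B : 'M[C]_(c'.+1, (d_c D).+1), row_free B /\ (B :=: W)%MS.
  by move=> d B0 fB0 eB0 Ed; subst d; exists B0.
move=> /(_ _ (row_base W) (row_base_free W) (eq_row_base W) rW) [B [fB eB]].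
exists B; split => //.
- by move=> j1 j2 /enum_val_inj /cast_ord_inj.
- by move=> j; have := enum_valP (cast_ord e j); rewrite inE.
- move=> i Hi; have HiJ : i \in J by rewrite inE.
  exists (cast_ord (esym e) (enum_rank_in HiJ i)).
  by rewrite cast_ordKV enum_rankK_in.
Qed.

End Make.

Lemma ok_subdata (R : realType) (D : data R) (W Wc : 'M[complex R]_((d_c D).+1)) :
  data_ok D ->
  (forall x : 'rV_(d_c D).+1, (x <= W)%MS -> (x <= Wc)%MS -> x = 0) ->
  (forall i, (acol D i <= W)%MS \/ (acol D i <= Wc)%MS) ->
  forall r' c' (sg : 'I_r'.+1 -> 'I_(d_r D).+1) (B : 'M[complex R]_(c'.+1, (d_c D).+1)),
  injective sg -> (forall j, inW R D W (sg j)) ->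
  (forall i, inW R D W i -> exists j, sg j = i) -> row_free B -> (B :=: W)%MS ->
  forall m', data_ok (subdata R D r' c' sg (Amx R D r' c' sg B) m').
Proof.
move=> okD cap0 colW r' c' sg B sinj sP ssurj Bfree BW m'.
case: okD => rankA pairD nposD lposD; split.
- exact: (@rankAmx _ _ _ _ rankA cap0 colW _ _ _ _ sinj sP ssurj Bfree BW).
- move=> j j' jj'; rewrite /acol /= !acolAmx.
  apply: (@pairAmx _ _ _ _ _ _ _ sP BW); apply: pairD; by rewrite (inj_eq sinj).
- by move=> i; apply: nposD.
- by move=> i j; apply: lposD.
Qed.

Theorem lemma3p6 (R : realType) (D : data R)
  (V1 V2 : 'M[complex R]_((d_c D).+1)) :
  data_ok D ->
  (d_c D <= d_r D)%N -> (0 < d_c D)%N ->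
  (* C^{c+1} = V1 (+) V2 (row spaces of V1, V2) *)
  (V1 + V2 == 1%:M)%MS -> mxdirect (V1 + V2) ->
  (forall i, (acol D i <= V1)%MS \/ (acol D i <= V2)%MS) ->
  ((\rank V1 = 1%N ->
     exists D' : data R,
       [/\ data_ok D', (\rank (d_A D') < \rank (d_A D))%N,
           (d_m D < d_m D')%N & pres_iso (RAP D) (RAP D')])
  /\
   ((1 < \rank V1)%N -> (1 < \rank V2)%N ->
     exists D1 D2 : data R,
       [/\ data_ok D1, data_ok D2,
           (\rank (d_A D1) + \rank (d_A D2) = \rank (d_A D))%N &
           pres_iso (RAP D) (pres_tensor (RAP D1) (RAP D2))])).
Proof.
move=> okD crD c0 sum12 dir12 col12.
have okD' := okD; case: okD' => rankA pairD nposD lposD.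
have cap12 : forall x : 'rV_(d_c D).+1, (x <= V1)%MS -> (x <= V2)%MS -> x = 0.
  move=> x h1 h2; apply/eqP; rewrite -submx0 -(mxdirect_addsP dir12) sub_capmx h1 h2.
  by [].
have cap21 : forall x : 'rV_(d_c D).+1, (x <= V2)%MS -> (x <= V1)%MS -> x = 0.
  by move=> x h2 h1; apply: cap12.
have col21 : forall i, (acol D i <= V2)%MS \/ (acol D i <= V1)%MS.
  by move=> i; case: (col12 i) => H; [right|left].
have rk12 : (\rank V1 + \rank V2)%N = (d_c D).+1.
  by rewrite -mxrank_disjoint_sum ?(mxdirect_addsP dir12) // (eqmx_rank sum12) mxrank1.
have acol_nz : forall i, acol D i != 0.
  move=> i.
  have [j ji] : exists j : 'I_(d_r D).+1, i != j.
    case: (eqVneq i ord0) => [->|Hi]; last by exists ord0.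
    exists ord_max; apply/eqP => /(congr1 val) /= E.
    by move: crD c0; rewrite -E; case: (d_c D).
  have := pairD i j ji; move/eqP; apply: contraTneq => ->.
  rewrite -addsmxE adds0mx.
  by apply/eqP => E; move: (rank_leq_row (acol D j)); rewrite E.
have notboth : forall i, inW R D V1 i -> ~~ inW R D V2 i.
  move=> i h1; apply/negP => h2; move: (acol_nz i).
  by rewrite (cap12 _ h1 h2) eqxx.
have inV2 : forall i, inW R D V2 i = ~~ inW R D V1 i.
  move=> i; case h1: (inW R D V1 i); first by apply/negbTE/notboth.
  by case: (col12 i) => h; [move: h1; rewrite /inW h | exact: h].
split.
- move=> r1.
  have rk2 : \rank V2 = (d_c D).-1.+1.
    by rewrite prednK //; move: rk12; rewrite r1 add1n => -[].
  have [r' [sg [B [sinj sP ssurj Bfree BW]]]] :=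
    @make_sg R D V2 V1 rankA cap21 col21 _ rk2.
  have [i0 Hi0] := @exists_col R D V1 V2 rankA cap12 col12 (ltac:(by rewrite r1)).
  have ne_i0 : forall i, i != i0 -> inW R D V2 i.
    move=> i ii0; rewrite inV2; apply/negP => h1.
    have := pairD i i0 ii0; move/eqP; apply/negP; rewrite neq_ltn; apply/orP; left.
    have : (col_mx (acol D i) (acol D i0) <= V1)%MS.
      by rewrite col_mx_sub; apply/andP; split; [exact: h1 | exact: Hi0].
    by move/mxrankS; rewrite r1.
  have not2_i0 : ~~ inW R D V2 i0 by rewrite inV2 Hi0.
  have sne : forall j, sg j != i0.
    by move=> j; apply/eqP => E; move: (sP j); rewrite E (negbTE not2_i0).
  have ssurj' : forall i, i != i0 -> exists j, sg j = i.
    by move=> i h; apply: ssurj; apply: ne_i0.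
  set A' := Amx R D r' (d_c D).-1 sg B.
  exists (subdata R D r' (d_c D).-1 sg A' (d_m D + d_n D i0)); split.
  + exact: (@ok_subdata _ _ _ _ okD cap21 col21 _ _ _ _ sinj sP ssurj Bfree BW _).
  + by rewrite /= (@rankAmx _ _ _ _ rankA cap21 col21 _ _ _ _ sinj sP ssurj Bfree BW) rankA prednK.
  + by rewrite /= -[X in (X < _)%N]addn0 ltn_add2l nposD.
  + set D' := subdata R D r' (d_c D).-1 sg A' (d_m D + d_n D i0).
    set e := @e_one R D r' (d_c D).-1 sg A' i0.
    have [einv [eK eKi]] := @bij_inv _ _ e (@e_one_inj R D r' _ sg A' i0 sinj sne) (@e_one_surj R D r' _ sg A' i0 ssurj').
    have v0 : forall v : 'cV_(d_r D).+1, d_A D *m v = 0 -> v i0 0 = 0.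
      move=> v Av; have [_ H] := @ker_split R D V2 V1 cap21 col21 v Av.
      rewrite (big_pred1 i0) in H; last first.
        move=> i /=; case: (eqVneq i i0) => [->|h]; first by rewrite not2_i0.
        by rewrite ne_i0.
      by move/eqP: H; rewrite scaler_eq0 (negbTE (acol_nz i0)) orbF => /eqP.
    apply: (@iso_rename R _ _ _ _ (fun i => enum_rank (einv (enum_val i)))
                            (fun j => enum_rank (e (enum_val j)))).
    * by move=> i; rewrite enum_rankK eKi enum_valK.
    * by move=> j; rewrite enum_rankK eK enum_valK.
    * move=> x [v [Av ->]].
      rewrite (@gv_split R D V2 r' sg sinj sP ssurj v).
      rewrite [X in _ + X]big1 ?addr0; last first.
        move=> i hi; have -> : i = i0.
          by apply/eqP; apply: contraR hi => /ne_i0 ->.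
        by rewrite v0 // scale0r.
      rewrite (@gen_fwd R D r' (d_c D).-1 sg B _ _ _ (fun i => 'X_i)); last first.
        move=> j z; rewrite substX subst_id enum_rankK.
        by rewrite -[X in _ = 'X_(enum_rank X)](eK (inl (existT _ j z))).
      rewrite subst_id; apply: ideal_genG; exists (\col_j v (sg j) 0); split => //.
      exact: (@ker_restr R D V2 V1 cap21 col21 _ _ _ _ sinj sP ssurj Bfree BW).
    * move=> y [w [Aw ->]].
      rewrite (@gen_bwd R D V2 r' (d_c D).-1 sg B sinj sP ssurj); last first.
        by move=> j x; rewrite substX enum_rankK.
      apply: ideal_genG; exists (ext R D r' sg w); split => //.
      exact: (@kerA_ext R D V2 r' _ sg B sinj sP ssurj Bfree BW).
- move=> r1 r2.
  have rk1 : \rank V1 = (\rank V1).-1.+1 by rewrite prednK // ltnW.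
  have rk2 : \rank V2 = (\rank V2).-1.+1 by rewrite prednK // ltnW.
  have [ra [sa [Ba [ainj aP asurj afree aW]]]] :=
    @make_sg R D V1 V2 rankA cap12 col12 _ rk1.
  have [rb [sb [Bb [binj bP bsurj bfree bW]]]] :=
    @make_sg R D V2 V1 rankA cap21 col21 _ rk2.
  set ca := (\rank V1).-1. set cb := (\rank V2).-1.
  set Aa := Amx R D ra ca sa Ba. set Ab := Amx R D rb cb sb Bb.
  exists (subdata R D ra ca sa Aa 0), (subdata R D rb cb sb Ab (d_m D)); split.
  + exact: (@ok_subdata _ _ _ _ okD cap12 col12 _ _ _ _ ainj aP asurj afree aW _).
  + exact: (@ok_subdata _ _ _ _ okD cap21 col21 _ _ _ _ binj bP bsurj bfree bW _).
  + rewrite /= (@rankAmx _ _ _ _ rankA cap12 col12 _ _ _ _ ainj aP asurj afree aW).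
    by rewrite (@rankAmx _ _ _ _ rankA cap21 col21 _ _ _ _ binj bP bsurj bfree bW) -rk1 -rk2 rk12 rankA.
  + set D1 := subdata R D ra ca sa Aa 0. set D2 := subdata R D rb cb sb Ab (d_m D).
    set e := @e_two R D ra ca sa Aa rb cb sb Ab.
    have ab_ne : forall j1 j2, sa j1 != sb j2.
      by move=> j1 j2; apply/eqP => E; move: (notboth _ (aP j1)); rewrite E bP.
    have cov : forall i, (exists j, sa j = i) \/ (exists j, sb j = i).
      move=> i; case h: (inW R D V1 i); first by left; exact: asurj.
      by right; apply: bsurj; rewrite inV2 h.
    have [einv [eK eKi]] := @bij_inv _ _ e
      (@e_two_inj R D ra ca sa Aa rb cb sb Ab ainj binj ab_ne)
      (@e_two_surj R D ra ca sa Aa rb cb sb Ab cov).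
    have eL : forall w : var_type R D1,
        e (lshift (nvars D2) (enum_rank w)) = e_sub R D ra ca sa Aa 0 (leq0n _) w.
      by move=> w; rewrite /e /e_two split_lshift enum_rankK.
    have eR : forall w : var_type R D2,
        e (rshift (nvars D1) (enum_rank w)) = e_sub R D rb cb sb Ab (d_m D) (leqnn _) w.
      by move=> w; rewrite /e /e_two split_rshift enum_rankK.
    rewrite /RAP /pres_tensor.
    apply: (@iso_rename R _ _ _ _ (fun i => einv (enum_val i)) (fun k => enum_rank (e k))).
    * by move=> i; rewrite eKi enum_valK.
    * by move=> k; rewrite enum_rankK eK.
    * move=> x [v [Av ->]].
      rewrite (@gv_split R D V1 ra sa ainj aP asurj v).
      rewrite [X in _ + X](eq_bigl (inW R D V2)); last by move=> i; rewrite inV2.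
      rewrite (@sum_sg R D V2 rb sb binj bP bsurj) substD.
      rewrite (@gen_fwd R D ra ca sa Ba 0 _ _ (fun i => 'X_(lshift (nvars D2) i))); last first.
        move=> j z; rewrite !substX enum_rankK.
        by rewrite -[X in _ = 'X_X]eK eL.
      rewrite (@gen_fwd R D rb cb sb Bb (d_m D) _ _ (fun i => 'X_(rshift (nvars D1) i))); last first.
        move=> j z; rewrite !substX enum_rankK.
        by rewrite -[X in _ = 'X_X]eK eR.
      apply: ideal_genD; apply: ideal_genG.
      - left; exists (gv D1 (\col_j v (sa j) 0)); split => //.
        apply: ideal_genG; exists (\col_j v (sa j) 0); split => //.
        exact: (@ker_restr R D V1 V2 cap12 col12 _ _ _ _ ainj aP asurj afree aW).
      - right; exists (gv D2 (\col_j v (sb j) 0)); split => //.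
        apply: ideal_genG; exists (\col_j v (sb j) 0); split => //.
        exact: (@ker_restr R D V2 V1 cap21 col21 _ _ _ _ binj bP bsurj bfree bW).
    * move=> y [[p [Ip ->]]|[q [Iq ->]]]; rewrite subst_comp.
      - apply: (@ideal_gen_subst R _ _ _ _ _ _ p Ip) => g0 [w [Aw ->]].
        rewrite (@gen_bwd R D V1 ra ca sa Ba ainj aP asurj 0); last first.
          by move=> j z; rewrite substX /= substX eL.
        apply: ideal_genG; exists (ext R D ra sa w); split => //.
        exact: (@kerA_ext R D V1 ra _ sa Ba ainj aP asurj afree aW).
      - apply: (@ideal_gen_subst R _ _ _ _ _ _ q Iq) => g0 [w [Aw ->]].
        rewrite (@gen_bwd R D V2 rb cb sb Bb binj bP bsurj (d_m D)); last first.
          by move=> j z; rewrite substX /= substX eR.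
        apply: ideal_genG; exists (ext R D rb sb w); split => //.
        exact: (@kerA_ext R D V2 rb _ sb Bb binj bP bsurj bfree bW).
Qed.
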